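(* Let $(R,pR)$ be a discrete valuation domain with valuation $\mathsf{v}$ and finite residue field, $f\in R[x]$ non-constant and primitive with irreducible divisor set $\mathcal{P}$, and $n:=\mathsf{v}(\operatorname{d}(f))\ge 1$. Let $W\subseteq\mathcal{W}(f)$ be a set of representatives of $\mathcal{W}(f)$ modulo $p^{\lceil n/2\rceil}R$ (i.e. $W$ contains exactly one element of each residue class modulo $p^{\lceil n/2\rceil}R$ that meets $\mathcal{W}(f)$). Then for every $a\in\mathcal{W}(f)$ there exists $w\in W$ with $\mathsf{v}_{\mathcal{P}}(a)=\mathsf{v}_{\mathcal{P}}(w)$. In particular, the matrix in $\mathbb{Q}^{W\times\mathcal{P}}$ whose row indexed by $w$ is $\mathsf{v}_{\mathcal{P}}(w)$ has kernel equal to $\operatorname{fdk}(f)$.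
   Context: $\operatorname{d}(f)=\gcd(f(a)\mid a\in R)$, so $\mathsf{v}(\operatorname{d}(f))=\min_{a\in R}\mathsf{v}(f(a))$. Primitive means the coefficients generate $R$. An irreducible divisor set $\mathcal{P}$ of $f$ is a set of representatives of the associate classes of irreducible divisors of $f$ in $R[x]$. For $a\in R$, $\mathsf{v}_{\mathcal{P}}(a)=(\mathsf{v}(g(a)))_{g\in\mathcal{P}}$. $\mathcal{W}(f)=\{a\in R\mid \mathsf{v}(f(a))=\mathsf{v}(\operatorname{d}(f))\}$, and $\operatorname{fdk}(f)=\{(u_g)_{g\in\mathcal{P}}\in\mathbb{Q}^{\mathcal{P}}\mid \forall a\in\mathcal{W}(f):\sum_{g}u_g\,\mathsf{v}(g(a))=0\}$. *)

(* Defs.v *)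
From mathcomp Require Import all_boot all_algebra.
Set Implicit Arguments.
Unset Strict Implicit.
Unset Printing Implicit Defensive.
Import GRing.Theory Num.Theory.
Local Open Scope ring_scope.

Definition rdvd (T : comNzRingType) (x y : T) : Prop := exists c, y = x * c.

Definition rassoc (T : comUnitRingType) (x y : T) : Prop :=
  exists u, u \is a GRing.unit /\ x = u * y.

Definition rirreducible (T : comUnitRingType) (x : T) : Prop :=
  [/\ x != 0, x \isn't a GRing.unit &
      forall a b, x = a * b -> a \is a GRing.unit \/ b \is a GRing.unit].

(* R is a discrete valuation domain with uniformizer p and (normalized)
   valuation v: every nonzero a is u * p^(v a) with u a unit. *)
Definition is_dvr_valuation (R : idomainType) (p : R) (v : R -> nat) : Prop :=
  [/\ p != 0, p \isn't a GRing.unit &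
      forall a, a != 0 -> exists u, u \is a GRing.unit /\ a = u * p ^+ v a].

Definition finite_residue (R : idomainType) (p : R) : Prop :=
  exists s : seq R, forall a, exists2 r, r \in s & rdvd p (a - r).

Definition primitive_poly (R : idomainType) (f : {poly R}) : Prop :=
  exists c : nat -> R, \sum_(i < size f) c i * f`_i = 1.

(* n = v(d(f)) = min_{a in R} v(f(a))  (v(0) = infinity). *)
Definition is_val_fixdiv (R : idomainType) (v : R -> nat) (f : {poly R}) (n : nat) : Prop :=
  (exists a, f.[a] != 0 /\ v f.[a] = n) /\
  (forall a, f.[a] != 0 -> (n <= v f.[a])%N).

Definition in_Wf (R : idomainType) (v : R -> nat) (f : {poly R}) (n : nat) (a : R) : Prop :=
  f.[a] != 0 /\ v f.[a] = n.

Definition irr_divisor_set (R : idomainType) (f : {poly R}) (P : seq {poly R}) : Prop :=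
  [/\ forall g, g \in P -> rirreducible g /\ rdvd g f,
      forall i j : 'I_(size P), rassoc P`_i P`_j -> i = j &
      forall g, rirreducible g -> rdvd g f -> exists2 h, h \in P & rassoc g h].

Definition vP (R : idomainType) (v : R -> nat) (P : seq {poly R}) (a : R)
  : 'I_(size P) -> nat := fun i => v (P`_i).[a].

Definition reps_mod (R : idomainType) (p : R) (m : nat) (Wf W : R -> Prop) : Prop :=
  [/\ forall w, W w -> Wf w,
      forall a, Wf a -> exists w, W w /\ rdvd (p ^+ m) (a - w) &
      forall w1 w2, W w1 -> W w2 -> rdvd (p ^+ m) (w1 - w2) -> w1 = w2].
Arguments vP {R} v P a _.
Arguments is_dvr_valuation {R} p v.
Arguments is_val_fixdiv {R} v f n.
Arguments in_Wf {R} v f n a.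
Arguments reps_mod {R} p m Wf W.

(* Main.v *)
Require Import Defs.
From mathcomp Require Import all_boot all_algebra.
From mathcomp Require Import zify ring.
From Stdlib Require Import FunctionalExtensionality.
Import GRing.Theory Num.Theory.
Local Open Scope ring_scope.

Section Aux.
Set Implicit Arguments.
Variables (R : idomainType) (p : R) (v : R -> nat).
Hypothesis hv : is_dvr_valuation p v.

Lemma p_unitM c : p * c \isn't a GRing.unit.
Proof.
case: hv => p0 pnu _; by rewrite unitrM (negbTE pnu).
Qed.

Lemma L0 {u k j c} : u \is a GRing.unit -> (k < j)%N -> u * p ^+ k <> p ^+ j * c.
Proof.
move=> uu lt E; case: hv => p0 pnu _.
have pk0 : p ^+ k != 0 by rewrite expf_neq0.
have : u = p * (p ^+ (j - k).-1 * c).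
  apply: (mulIf pk0); rewrite E mulrA -exprS -mulrA [c * _]mulrC mulrA -exprD.
  congr (_ ^+ _ * _); lia.
by move=> Eu; move: uu; rewrite Eu (negbTE (p_unitM _)).
Qed.

Lemma L1 {x k c} : x != 0 -> x = p ^+ k * c -> (k <= v x)%N.
Proof.
move=> x0 E; case: hv => _ _ /(_ x x0) [u [uu Ex]].
rewrite leqNgt; apply/negP => lt; exact: (L0 uu lt (etrans (esym Ex) E)).
Qed.

Lemma L2 {x u k} : u \is a GRing.unit -> x = u * p ^+ k -> v x = k.
Proof.
move=> uu E; case: hv => p0 _ H.
have u0 : u != 0 by apply/eqP=> u0; move: uu; rewrite u0 unitr0.
have x0 : x != 0 by rewrite E mulf_neq0 ?expf_neq0.
apply/eqP; rewrite eqn_leq; apply/andP; split; last first.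
  by apply: (L1 (c := u) x0); rewrite E mulrC.
have [u' [uu' E']] := H x x0.
rewrite leqNgt; apply/negP => lt; apply: (L0 uu lt (c := u')); by rewrite -E {1}E' mulrC.
Qed.

Lemma L3 {x y} : x != 0 -> y != 0 -> v (x * y) = (v x + v y)%N.
Proof.
move=> x0 y0; case: hv => _ _ H.
have [u [uu E]] := H x x0; have [u' [uu' E']] := H y y0.
apply: (L2 (u := u * u')); first by rewrite unitrM uu uu'.
by rewrite {1}E {1}E' exprD; ring.
Qed.

Lemma unit_addp {u} c : u \is a GRing.unit -> u + p * c \is a GRing.unit.
Proof.
move=> uu; case: hv => _ _ H.
have [z0|nz] := eqVneq (u + p * c) 0.
  have : u = p * (- c) by apply/eqP; rewrite mulrN -subr_eq0 opprK z0.
  by move=> Eu; move: uu; rewrite Eu (negbTE (p_unitM _)).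
have [u' [uu' E]] := H _ nz.
case En: (v (u + p * c)) E => [|s] E; first by rewrite E expr0 mulr1.
have : u = p * (u' * p ^+ s - c).
  have E2 : u = u' * p ^+ s.+1 - p * c by rewrite -E; ring.
  rewrite E2 exprS; ring.
by move=> Eu; move: uu; rewrite Eu (negbTE (p_unitM _)).
Qed.

Lemma L4 {x y m c} : x != 0 -> (v x < m)%N -> x - y = p ^+ m * c -> y != 0 /\ v y = v x.
Proof.
move=> x0 lt E; case: hv => p0 _ H.
have [u [uu Ex]] := H x x0.
set k := v x in lt Ex *.
have [j Em] : exists j, m = (k + j.+1)%N by exists (m - k).-1; lia.
have Ey : y = (u + p * (- (p ^+ j * c))) * p ^+ k.
  have -> : y = x - p ^+ m * c by rewrite -E; ring.
  rewrite Ex Em exprD exprS; ring.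
have uz := unit_addp (- (p ^+ j * c)) uu.
split; last exact: (L2 uz Ey).
have z0 : u + p * - (p ^+ j * c) != 0 by apply/eqP=> z0; move: uz; rewrite z0 unitr0.
by rewrite Ey mulf_neq0 ?expf_neq0.
Qed.

Lemma L5 {x y m c} : x != 0 -> y != 0 -> (m <= v x)%N -> x - y = p ^+ m * c -> (m <= v y)%N.
Proof.
move=> x0 y0 le E; case: hv => p0 _ H.
have [u [uu Ex]] := H x x0.
apply: (L1 (c := u * p ^+ (v x - m) - c) y0).
have -> : y = x - p ^+ m * c by rewrite -E; ring.
rewrite {1}Ex; have -> : v x = (m + (v x - m))%N by lia.
rewrite exprD; have -> : (m + (v x - m) - m)%N = (v x - m)%N by lia. ring.
Qed.

Lemma horner_diff (g : {poly R}) a w : exists q : R, g.[a] - g.[w] = q * (a - w).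
Proof.
have : root (g - g.[w]%:P) w by rewrite /root hornerD hornerN hornerC subrr.
case/factor_theorem => q Eq; exists q.[a].
by have := congr1 (fun r => r.[a]) Eq; rewrite /= hornerD hornerN hornerC hornerM hornerD hornerN hornerX hornerC.
Qed.

End Aux.

Theorem lemma4p4 (R : idomainType) (p : R) (v : R -> nat)
  (f : {poly R}) (P : seq {poly R}) (n : nat) (W : R -> Prop) :
  is_dvr_valuation p v ->
  finite_residue p ->
  (1 < size f)%N ->
  primitive_poly f ->
  irr_divisor_set f P ->
  is_val_fixdiv v f n ->
  (1 <= n)%N ->
  reps_mod p (uphalf n) (in_Wf v f n) W ->
  (forall a, in_Wf v f n a -> exists w, W w /\ vP v P a = vP v P w) /\
  (forall u : 'I_(size P) -> rat,
     (forall w, W w -> \sum_(i < size P) u i * ((vP v P w i)%:R : rat) = 0) <->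
     (forall a, in_Wf v f n a -> \sum_(i < size P) u i * ((vP v P a i)%:R : rat) = 0)).
Proof.
move=> hv _ _ _ [HP _ _] _ _ [WW Wex _].
set m := uphalf n.
have nm : (n <= m + m)%N.
  have := uphalfK n; rewrite /m -addnn => h.
  have : (odd n <= 1)%N by case: odd. lia.
have part1 : forall a, in_Wf v f n a -> exists w, W w /\ vP v P a = vP v P w.
  move=> a Ha; have [w [Ww [c Ec]]] := Wex a Ha; exists w; split => //.
  have [fw0 vfw] := WW w Ww; case: Ha => fa0 vfa.
  apply: functional_extensionality => i; rewrite /vP.
  have /HP [_ [h Eh]] : P`_i \in P by apply: mem_nth.
  set g := P`_i in Eh *.
  have Ea : f.[a] = g.[a] * h.[a] by rewrite Eh hornerM.
  have Ew : f.[w] = g.[w] * h.[w] by rewrite Eh hornerM.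
  have ga0 : g.[a] != 0 by apply: contraNneq fa0; rewrite Ea => ->; rewrite mul0r.
  have ha0 : h.[a] != 0 by apply: contraNneq fa0; rewrite Ea => ->; rewrite mulr0.
  have gw0 : g.[w] != 0 by apply: contraNneq fw0; rewrite Ew => ->; rewrite mul0r.
  have hw0 : h.[w] != 0 by apply: contraNneq fw0; rewrite Ew => ->; rewrite mulr0.
  have sa := L3 hv ga0 ha0; rewrite -Ea vfa in sa.
  have sw := L3 hv gw0 hw0; rewrite -Ew vfw in sw.
  have [qg Eg] := horner_diff g a w; have [qh Eh'] := horner_diff h a w.
  have Dg : g.[a] - g.[w] = p ^+ m * (qg * c) by rewrite Eg Ec; ring.
  have Dh : h.[a] - h.[w] = p ^+ m * (qh * c) by rewrite Eh' Ec; ring.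
  have i1 : (v g.[a] < m)%N -> v g.[w] = v g.[a] by move=> lt; case: (L4 hv ga0 lt Dg).
  have i2 : (v h.[a] < m)%N -> v h.[w] = v h.[a] by move=> lt; case: (L4 hv ha0 lt Dh).
  have i3 : (m <= v g.[a])%N -> (m <= v g.[w])%N by move=> le; apply: (L5 hv ga0 gw0 le Dg).
  have i4 : (m <= v h.[a])%N -> (m <= v h.[w])%N by move=> le; apply: (L5 hv ha0 hw0 le Dh).
  lia.
split => // u; split.
  move=> Hw a /part1 [w [Ww ->]]; exact: Hw.
move=> Ha w Ww; exact: Ha (WW w Ww).
Qed.
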